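(* Let $\mathbb{A}_1,\ldots,\mathbb{A}_n,\mathbb{B}$ be sized CPOs with sets of maximal elements $A_1,\ldots,A_n,B$ and size ordinals $\zeta_{\mathbb{A}_1},\ldots,\zeta_{\mathbb{A}_n},\zeta_{\mathbb{B}}$, and let $A=A_1\times\cdots\times A_n$. Let $h:A_1\times\cdots\times A_n\times B^m\to B$ and $g_i:A\to A$ ($i=1,\ldots,m$) with $g_i(x_1,\ldots,x_n)=\langle g_i^1(x_1,\ldots,x_n),\ldots,g_i^n(x_1,\ldots,x_n)\rangle$, where $g_i^j:A\to A_j$. Let $\eta_h$ be a production function for $h$ and $\eta_{i,j}$ a production function for $g_i^j$ ($i=1,\ldots,m$, $j=1,\ldots,n$). Assume that $\eta_h(\zeta_{\mathbb{A}_1},\ldots,\zeta_{\mathbb{A}_n},\beta_1,\ldots,\beta_m)>\min_{i=1,\ldots,m}\beta_i$ for all $\beta_1,\ldots,\beta_m\le\zeta_{\mathbb{B}}$ with $\beta_i<\zeta_{\mathbb{B}}$ for some $i$. If $f:A\to B$ is a function defined by corecursion from $h$ and $g_1,\ldots,g_m$, then there exists a production function $\eta_f$ for $f$ satisfying, for all $\bar\alpha\in\mathrm{On}(\zeta_{\mathbb{A}_1})\times\cdots\times\mathrm{On}(\zeta_{\mathbb{A}_n})$, $$\eta_f(\bar\alpha)=\eta_h\big(\bar\alpha,\ \eta_f(\eta_{1,1}(\bar\alpha),\ldots,\eta_{1,n}(\bar\alpha)),\ \ldots,\ \eta_f(\eta_{m,1}(\bar\alpha),\ldots,\eta_{m,n}(\bar\alpha))\big).$$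 Moreover, if $\eta_h$ and all $\eta_{i,j}$ are continuous, then so is $\eta_f$.
   Context: A CPO is a partial order with a least element in which every directed set has a supremum; a function between CPOs is continuous if it maps directed sets to directed sets and preserves their suprema; products of CPOs are ordered componentwise. For an ordinal $\zeta$, $\mathrm{On}(\zeta)$ is the set of ordinals $\le\zeta$ with the usual order. A sized CPO is a tuple $\langle\mathbb{A},\zeta,s,\mathtt{cut}\rangle$ where $\mathbb{A}$ is a CPO, $\zeta$ an ordinal (the size ordinal), $s:\mathbb{A}\to\mathrm{On}(\zeta)$ (size function) and $\mathtt{cut}:\mathrm{On}(\zeta)\times\mathbb{A}\to\mathbb{A}$, such that for $x\in\mathbb{A}$, $\alpha\le\zeta$: $s$ is surjective and continuous; $s(x)=\zeta$ iff $x$ is maximal in $\mathbb{A}$; $\mathtt{cut}$ is monotone in both arguments; $s(\mathtt{cut}(\alpha,x))=\alpha$ if $s(x)>\alpha$; $\mathtt{cut}(\alpha,x)=x$ if $s(x)\le\alpha$. A function between CPOs is regular if it is monotone and maps maximal elements to maximal elements. Given sized CPOs $\mathbb{A}_1,\ldots,\mathbb{A}_k,\mathbb{B}$ with sets of maximal elements $A_1,\ldots,A_k,B$, a production function for $f:A_1\times\cdots\times A_k\to B$ is any function $\eta:\mathrm{On}(\zeta_{\mathbb{A}_1})\times\cdots\times\mathrm{On}(\zeta_{\mathbb{A}_k})\to\mathrm{On}(\zeta_{\mathbb{B}})$ such that there is a regular $f^*:\mathbb{A}_1\times\cdots\times\mathbb{A}_k\to\mathbb{B}$ extending $f$ with $\eta(s(x_1),\ldots,s(x_k))=s(f^*(x_1,\ldots,x_k))$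 for all $x_i\in\mathbb{A}_i$. A function $f:S\to Q$ is defined by corecursion from $h:S\times Q^m\to Q$ and $g_i:S\to S$ if it is the unique function in $Q^S$ satisfying $f(x)=h(x,f(g_1(x)),\ldots,f(g_m(x)))$ for all $x\in S$. *)

(* Defs.v *)
From mathcomp Require Import all_boot.
Set Implicit Arguments. Unset Strict Implicit. Unset Printing Implicit Defensive.

Definition directed {T : Type} (le : T -> T -> Prop) (D : T -> Prop) : Prop :=
  (exists x, D x) /\
  (forall x y, D x -> D y -> exists z, D z /\ le x z /\ le y z).

Definition is_sup {T : Type} (le : T -> T -> Prop) (D : T -> Prop) (s : T) : Prop :=
  (forall x, D x -> le x s) /\ (forall u, (forall x, D x -> le x u) -> le s u).

Definition image {X Y : Type} (f : X -> Y) (D : X -> Prop) : Y -> Prop :=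
  fun y => exists x, D x /\ f x = y.

Definition continuous {X Y : Type} (leX : X -> X -> Prop) (leY : Y -> Y -> Prop)
  (f : X -> Y) : Prop :=
  forall D, directed leX D ->
    directed leY (image f D) /\
    (forall s, is_sup leX D s -> is_sup leY (image f D) (f s)).

Definition monotone {X Y : Type} (leX : X -> X -> Prop) (leY : Y -> Y -> Prop)
  (f : X -> Y) : Prop := forall x y, leX x y -> leY (f x) (f y).

Definition maximal {T : Type} (le : T -> T -> Prop) (x : T) : Prop :=
  forall y, le x y -> y = x.

Definition regular {X Y : Type} (leX : X -> X -> Prop) (leY : Y -> Y -> Prop)
  (f : X -> Y) : Prop :=
  monotone leX leY f /\ (forall x, maximal leX x -> maximal leY (f x)).

Definition prod_le {I : Type} {T : I -> Type} (le : forall i, T i -> T i -> Prop)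
  (x y : forall i, T i) : Prop := forall i, le i (x i) (y i).

Record cpo := CPO {
  car :> Type;
  le : car -> car -> Prop;
  le_refl : forall x, le x x;
  le_anti : forall x y, le x y -> le y x -> x = y;
  le_trans : forall x y z, le x y -> le y z -> le x z;
  bot : car;
  bot_le : forall x, le bot x;
  sup_ex : forall D, directed le D -> exists s, is_sup le D s }.

(** On(zeta) = the ordinals <= zeta with the usual order is represented (up to
   order isomorphism) by a type with a total well-order having a greatest
   element [otop] (playing the role of zeta).  *)
Record ordT := OrdT {
  ocar :> Type;
  ole : ocar -> ocar -> Prop;
  ole_refl : forall x, ole x x;
  ole_anti : forall x y, ole x y -> ole y x -> x = y;
  ole_trans : forall x y z, ole x y -> ole y z -> ole x z;
  ole_total : forall x y, ole x y \/ ole y x;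
  olt_wf : well_founded (fun x y => ole x y /\ x <> y);
  otop : ocar;
  ole_top : forall x, ole x otop }.

Definition olt (O : ordT) (x y : O) : Prop := ole x y /\ x <> y.

Record sized_cpo := SizedCPO {
  scpo :> cpo;
  zeta : ordT;
  size : scpo -> zeta;
  cut : zeta -> scpo -> scpo;
  size_surj : forall a : zeta, exists x, size x = a;
  size_cont : continuous (@le scpo) (@ole zeta) size;
  size_top : forall x, size x = otop zeta <-> maximal (@le scpo) x;
  cut_mono : forall a b x y, ole a b -> le x y -> le (cut a x) (cut b y);
  cut_size : forall a x, olt a (size x) -> size (cut a x) = a;
  cut_id : forall a x, ole (size x) a -> cut a x = x }.

Definition Max (A : sized_cpo) : Type := {x : A | maximal (@le A) x}.

Definition production_function {I : Type} (A : I -> sized_cpo) (B : sized_cpo)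
  (f : (forall i, Max (A i)) -> Max B)
  (eta : (forall i, zeta (A i)) -> zeta B) : Prop :=
  exists fstar : (forall i, A i) -> B,
    regular (prod_le (fun i => @le (A i))) (@le B) fstar /\
    (forall x : forall i, Max (A i), fstar (fun i => proj1_sig (x i)) = proj1_sig (f x)) /\
    (forall x : forall i, A i, eta (fun i => size (x i)) = size (fstar x)).

Definition ord_continuous {I : Type} (A : I -> sized_cpo) (B : sized_cpo)
  (eta : (forall i, zeta (A i)) -> zeta B) : Prop :=
  continuous (prod_le (fun i => @ole (zeta (A i)))) (@ole (zeta B)) eta.

Definition hdom {n m : nat} (A : 'I_n -> sized_cpo) (B : sized_cpo)
  (j : 'I_n + 'I_m) : sized_cpo :=
  match j with inl i => A i | inr _ => B end.

Definition hjoin {n m : nat} {A : 'I_n -> sized_cpo} {B : sized_cpo}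
  {F : sized_cpo -> Type} (x : forall i, F (A i)) (y : 'I_m -> F B) :
  forall j : 'I_n + 'I_m, F (hdom A B j) :=
  fun j => match j as j0 return F (hdom A B j0) with
           | inl i => x i | inr k => y k end.

Definition corec_eq {n m : nat} {A : 'I_n -> sized_cpo} {B : sized_cpo}
  (h : (forall j : 'I_n + 'I_m, Max (hdom A B j)) -> Max B)
  (g : 'I_m -> (forall i, Max (A i)) -> forall i, Max (A i))
  (f : (forall i, Max (A i)) -> Max B) : Prop :=
  forall x, f x = h (@hjoin n m A B Max x (fun k => f (g k x))).

Definition defined_by_corecursion {n m : nat} {A : 'I_n -> sized_cpo} {B : sized_cpo}
  (h : (forall j : 'I_n + 'I_m, Max (hdom A B j)) -> Max B)
  (g : 'I_m -> (forall i, Max (A i)) -> forall i, Max (A i))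
  (f : (forall i, Max (A i)) -> Max B) : Prop :=
  corec_eq h g f /\ (forall f', corec_eq h g f' -> forall x, f' x = f x).

Arguments production_function {I} A B f eta.
Arguments ord_continuous {I} A B eta.

(* Main.v *)
Require Import Defs.
From mathcomp Require Import all_boot.
From Stdlib Require Import Classical FunctionalExtensionality ProofIrrelevance IndefiniteDescription.
Import Defs.

Lemma sup_unique {T} {le : T -> T -> Prop} (anti : forall x y, le x y -> le y x -> x = y)
  {D s s'} : is_sup le D s -> is_sup le D s' -> s = s'.
Proof. intros [H1 H2] [H3 H4]. apply anti; [apply H2; exact H3 | apply H4; exact H1]. Qed.

Lemma is_sup_ext {T} {le : T -> T -> Prop} {D D' s} :
  (forall x, D x <-> D' x) -> is_sup le D s -> is_sup le D' s.
Proof.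
  intros HE [H1 H2]. split.
  - intros x Hx. apply H1. apply HE. exact Hx.
  - intros u Hu. apply H2. intros x Hx. apply Hu. apply HE. exact Hx.
Qed.

Lemma cont_mono {X Y} {leX : X -> X -> Prop} {leY : Y -> Y -> Prop}
  (reflX : forall x, leX x x) {f} : continuous leX leY f -> monotone leX leY f.
Proof.
  intros Hc x y Hxy.
  pose (D := fun z => z = x \/ z = y).
  assert (Dd : directed leX D).
  { split. exists x; left; reflexivity.
    intros a b Ha Hb. exists y. split. right; reflexivity.
    destruct Ha as [-> | ->], Hb as [-> | ->]; auto. }
  destruct (Hc D Dd) as [_ Hs].
  assert (Hy : is_sup leX D y).
  { split. intros z [-> | ->]; auto. intros u Hu. apply Hu. right; reflexivity. }
  destruct (Hs y Hy) as [Hub _]. apply Hub. exists x. split; [left; reflexivity| reflexivity].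
Qed.

Lemma cont_intro {X Y} (leX : X -> X -> Prop) (leY : Y -> Y -> Prop) f :
  monotone leX leY f ->
  (forall D, directed leX D -> forall s, is_sup leX D s -> is_sup leY (image f D) (f s)) ->
  continuous leX leY f.
Proof.
  intros Hm Hs D Dd. split; [|apply Hs; exact Dd].
  destruct Dd as [[x Hx] Hd]. split.
  - exists (f x). exists x. auto.
  - intros a b [x1 [H1 <-]] [x2 [H2 <-]].
    destruct (Hd x1 x2 H1 H2) as [z [Hz [Hz1 Hz2]]].
    exists (f z). split. exists z; auto. split; apply Hm; auto.
Qed.

Lemma cont_comp {X Y Z} {leX : X -> X -> Prop} {leY : Y -> Y -> Prop} {leZ : Z -> Z -> Prop}
  (reflX : forall x, leX x x) (reflY : forall y, leY y y) (f : X -> Y) (g : Y -> Z) :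
  continuous leX leY f -> continuous leY leZ g -> continuous leX leZ (fun x => g (f x)).
Proof.
  intros Hf Hg. apply cont_intro.
  - intros x y H. apply (cont_mono reflY Hg). apply (cont_mono reflX Hf). exact H.
  - intros D Dd s Hs. destruct (Hf D Dd) as [Hd1 Hs1].
    destruct (Hg _ Hd1) as [_ Hs2].
    apply (@is_sup_ext _ _ (image g (image f D))).
    + intros z. split.
      * intros [y [[x [Hx <-]] <-]]. exists x. auto.
      * intros [x [Hx <-]]. exists (f x). split; [exists x; auto | reflexivity].
    + apply Hs2. apply Hs1. exact Hs.
Qed.

Lemma cont_tuple {X I} {T : I -> Type} (leX : X -> X -> Prop) (leT : forall i, T i -> T i -> Prop)
  (reflX : forall x, leX x x) (f : X -> forall i, T i) :
  (forall i, continuous leX (leT i) (fun x => f x i)) -> continuous leX (prod_le leT) f.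
Proof.
  intros Hc. apply cont_intro.
  - intros x y H i. apply (cont_mono reflX (Hc i)). exact H.
  - intros D Dd s Hs. split.
    + intros z [d [Hd <-]] i. apply (cont_mono reflX (Hc i)). apply Hs. exact Hd.
    + intros u Hu i. destruct (Hc i D Dd) as [_ Hsi]. apply (Hsi s Hs).
      intros z [d [Hd <-]]. apply (Hu (f d)). exists d; auto.
Qed.

Definition upd {I : eqType} {T : I -> Type} (x : forall j, T j) (i : I) (v : T i) :
  forall j, T j :=
  fun j => match @eqP I i j with ReflectT e => eq_rect i T v j e | ReflectF _ => x j end.

Lemma upd_same {I : eqType} {T : I -> Type} (x : forall j, T j) i v : upd x i v i = v.
Proof.
  unfold upd. destruct (@eqP I i i) as [e|ne].
  - rewrite (eq_irrelevance e erefl). reflexivity.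
  - exfalso; apply ne; reflexivity.
Qed.

Lemma upd_other {I : eqType} {T : I -> Type} (x : forall j, T j) i v j : j <> i -> upd x i v j = x j.
Proof.
  intros H. unfold upd. destruct (@eqP I i j) as [e|ne].
  - exfalso; apply H; symmetry; exact e.
  - reflexivity.
Qed.

Lemma prod_le_upd {I : eqType} {T : I -> Type} (le : forall i, T i -> T i -> Prop)
  (x y : forall j, T j) i v :
  prod_le le x y -> le i (x i) v -> prod_le le x (upd y i v).
Proof.
  intros Hxy Hv j. destruct (classic (j = i)) as [-> | ne].
  - rewrite upd_same. exact Hv.
  - rewrite upd_other; auto.
Qed.

Lemma cont_proj {I : eqType} {T : I -> Type} (le : forall i, T i -> T i -> Prop) (i : I) :
  continuous (prod_le le) (le i) (fun x => x i).
Proof.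
  apply cont_intro.
  - intros x y H. apply H.
  - intros D Dd s Hs. split.
    + intros z [d [Hd <-]]. apply Hs. exact Hd.
    + intros u Hu. pose (s' := upd s i u).
      assert (H : prod_le le s s').
      { apply Hs. intros d Hd. apply prod_le_upd. apply Hs. exact Hd.
        apply Hu. exists d; auto. }
      specialize (H i). unfold s' in H. rewrite upd_same in H. exact H.
Qed.

Lemma cont_const {X Y} (leX : X -> X -> Prop) (leY : Y -> Y -> Prop)
  (reflY : forall y, leY y y) (c : Y) : continuous leX leY (fun _ => c).
Proof.
  apply cont_intro.
  - intros x y _. apply reflY.
  - intros D [[d Hd] _] s Hs. split.
    + intros z [x [_ <-]]. apply reflY.
    + intros u Hu. apply Hu. exists d. auto.
Qed.

Lemma cont_supfam {X} (O : ordT) (leX : X -> X -> Prop) (reflX : forall x, leX x x)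
  {E : (X -> O) -> Prop} {e : X -> O} :
  (forall a, is_sup (@ole O) (fun o => exists phi, E phi /\ phi a = o) (e a)) ->
  (forall phi, E phi -> continuous leX (@ole O) phi) ->
  continuous leX (@ole O) e.
Proof.
  intros He Hc.
  assert (Hm : monotone leX (@ole O) e).
  { intros a b Hab. apply (He a). intros o [phi [Hphi <-]].
    apply ole_trans with (phi b). apply (cont_mono reflX (Hc phi Hphi)). exact Hab.
    apply (He b). exists phi. auto. }
  apply cont_intro. exact Hm.
  intros D Dd s Hs. split.
  - intros z [a [Ha <-]]. apply Hm. apply Hs. exact Ha.
  - intros u Hu. apply (He s). intros o [phi [Hphi <-]].
    destruct (Hc phi Hphi D Dd) as [_ Hs2]. apply (Hs2 s Hs).
    intros z [a [Ha <-]]. apply ole_trans with (e a).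
    + apply (He a). exists phi. auto.
    + apply Hu. exists a. auto.
Qed.

Section BW.
Variables (X : Type) (le : X -> X -> Prop).
Hypotheses (refl : forall x, le x x) (anti : forall x y, le x y -> le y x -> x = y)
  (trans : forall x y z, le x y -> le y z -> le x z).
Variable (Phi : X -> X).
Hypothesis (mono : forall x y, le x y -> le (Phi x) (Phi y)).
Variables (G : X -> Prop) (b : X).
Hypotheses (Gb : G b) (ble : forall x, le b x) (GPhi : forall x, G x -> G (Phi x))
  (hsup : forall D, directed le D -> (forall x, D x -> G x) -> exists s, is_sup le D s /\ G s).

Definition closedS (S : X -> Prop) :=
  S b /\ (forall x, S x -> S (Phi x)) /\
  (forall D, directed le D -> (forall x, D x -> S x) -> forall s, is_sup le D s -> S s).
Definition Tw x := forall S, closedS S -> S x.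

Lemma Tw_closed : closedS Tw.
Proof.
  split; [|split].
  - intros S HS. apply HS.
  - intros x Hx S HS. apply HS. apply Hx. exact HS.
  - intros D Dd HD s Hs S HS. destruct HS as [H1 [H2 H3]]. apply (H3 D Dd); auto.
    intros x Hx. apply (HD x Hx). split; auto.
Qed.

Lemma Tw_ind (P : X -> Prop) : closedS (fun x => Tw x /\ P x) -> forall x, Tw x -> P x.
Proof. intros HC x Hx. apply (Hx _ HC). Qed.

Lemma Tw_post : forall x, Tw x -> le x (Phi x).
Proof.
  apply Tw_ind. destruct Tw_closed as [T1 [T2 T3]]. split; [|split].
  - split; auto.
  - intros x [Hx Hp]. split; auto.
  - intros D Dd HD s Hs. split. apply (T3 D Dd); auto. intros x Hx; apply (HD x Hx).
    apply Hs. intros d Hd. apply trans with (Phi d). apply (HD d Hd).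
    apply mono. apply Hs. exact Hd.
Qed.

Definition ltw x y := le x y /\ x <> y.
Definition extreme c := forall x, Tw x -> ltw x c -> le (Phi x) c.

Lemma M_all c : Tw c -> extreme c -> forall x, Tw x -> le x c \/ le (Phi c) x.
Proof.
  intros Tc Ec. apply Tw_ind. destruct Tw_closed as [T1 [T2 T3]]. split; [|split].
  - split; auto.
  - intros x [Tx [Hx | Hx]]; split; auto.
    + destruct (classic (x = c)) as [-> | ne]. right; apply refl.
      left. apply Ec; auto. split; auto.
    + right. apply trans with x; auto. apply Tw_post; auto.
  - intros D Dd HD s Hs. split. apply (T3 D Dd); auto. intros x Hx; apply (HD x Hx).
    destruct (classic (exists d, D d /\ le (Phi c) d)) as [[d [Hd Hle]] | Hn].
    + right. apply trans with d; auto. apply Hs; auto.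
    + left. apply Hs. intros d Hd. destruct (HD d Hd) as [_ [H|H]]; auto.
      exfalso; apply Hn; exists d; auto.
Qed.

Lemma ext_all : forall c, Tw c -> extreme c.
Proof.
  apply Tw_ind. destruct Tw_closed as [T1 [T2 T3]]. split; [|split].
  - split; auto. intros x Tx [Hl Hne]. exfalso. apply Hne. apply anti; auto.
  - intros c [Tc Ec]. split; auto. intros x Tx [Hl Hne].
    destruct (M_all _ Tc Ec _ Tx) as [H|H].
    + destruct (classic (x = c)) as [-> | ne]. apply refl.
      apply trans with c. apply Ec; auto. split; auto. apply Tw_post; auto.
    + exfalso. apply Hne. apply anti; auto.
  - intros D Dd HD s Hs. assert (Ts : Tw s). { apply (T3 D Dd); auto. intros x Hx; apply (HD x Hx). }
    split; auto. intros x Tx [Hl Hne].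
    destruct (classic (exists d, D d /\ le x d)) as [[d [Hd Hxd]] | Hn].
    + destruct (HD d Hd) as [Td Ed].
      destruct (classic (x = d)) as [-> | ne].
      * destruct (classic (forall d', D d' -> le d' d)) as [Hall | Hn2].
        -- exfalso. apply Hne. apply anti; auto. apply Hs. exact Hall.
        -- apply not_all_ex_not in Hn2. destruct Hn2 as [d' Hd'].
           apply imply_to_and in Hd'. destruct Hd' as [Hd' Hnle].
           destruct (M_all _ Td Ed _ (proj1 (HD d' Hd'))) as [H|H]. contradiction.
           apply trans with d'; auto. apply Hs; auto.
      * apply trans with d. apply Ed; auto. split; auto. apply Hs; auto.
    + exfalso. apply Hne. apply anti; auto. apply Hs. intros d Hd.
      destruct (HD d Hd) as [Td Ed].
      destruct (M_all _ Td Ed _ Tx) as [H|H].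
      * exfalso. apply Hn. exists d; auto.
      * apply trans with (Phi d); auto. apply Tw_post; auto.
Qed.

Lemma Tw_G : forall x, Tw x -> G x.
Proof.
  intros x Hx. apply Hx. split; [|split]; auto.
  intros D Dd HD s Hs. destruct (hsup _ Dd HD) as [s' [Hs' Gs']].
  rewrite (sup_unique anti Hs Hs'). exact Gs'.
Qed.

Lemma BW_fix : exists x, G x /\ Phi x = x.
Proof.
  destruct Tw_closed as [T1 [T2 T3]].
  assert (Dd : directed le Tw).
  { split. exists b; auto. intros x y Tx Ty.
    destruct (M_all _ Ty (ext_all _ Ty) _ Tx) as [H|H].
    - exists y. auto.
    - exists x. split; auto. split; auto. apply trans with (Phi y); auto. apply Tw_post; auto. }
  destruct (hsup _ Dd Tw_G) as [s [Hs Gs]].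
  assert (Ts : Tw s) by (apply (T3 Tw Dd); auto).
  exists s. split; auto. apply anti. apply Hs. apply T2; auto. apply Tw_post; auto.
Qed.
End BW.

Definition pick {C : sized_cpo} (a : zeta C) : C :=
  proj1_sig (constructive_indefinite_description _ (size_surj a)).
Lemma pick_size {C} (a : zeta C) : size (pick a) = a.
Proof. unfold pick. destruct (constructive_indefinite_description _ _). simpl. exact e. Qed.

Lemma Max_eq (C : sized_cpo) (a b : Max C) : proj1_sig a = proj1_sig b -> a = b.
Proof. destruct a as [a Ha], b as [b Hb]. simpl. intros ->. f_equal. apply proof_irrelevance. Qed.

Lemma maxprod {I : Type} (A : I -> sized_cpo) (x : forall i, A i) :
  (forall i, maximal (@le (A i)) (x i)) -> maximal (prod_le (fun i => @le (A i))) x.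
Proof. intros H y Hy. apply functional_extensionality_dep. intros i. apply H. apply Hy. Qed.

Lemma prodmax {I : eqType} (A : I -> sized_cpo) (x : forall i, A i) :
  maximal (prod_le (fun i => @le (A i))) x -> forall i, maximal (@le (A i)) (x i).
Proof.
  intros H i y Hy. assert (E : upd x i y = x).
  { apply H. apply prod_le_upd. intros j; apply le_refl. exact Hy. }
  pose proof (f_equal (fun z => z i) E) as E2. simpl in E2. unfold upd in E2.
  destruct (@eqP I i i) as [e|ne].
  - rewrite (eq_irrelevance e erefl) in E2. exact E2.
  - exfalso; apply ne; reflexivity.
Qed.

Lemma top_max (C : sized_cpo) (x : C) : size x = otop (zeta C) -> maximal (@le C) x.
Proof. apply size_top. Qed.
Lemma max_top (C : sized_cpo) (x : C) : maximal (@le C) x -> size x = otop (zeta C).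
Proof. apply size_top. Qed.

Section Main.
Variables (n m : nat) (A : 'I_n -> sized_cpo) (B : sized_cpo)
  (h : (forall j : 'I_n + 'I_m, Max (hdom A B j)) -> Max B)
  (g : 'I_m -> (forall i, Max (A i)) -> forall i, Max (A i))
  (eta_h : (forall j : 'I_n + 'I_m, zeta (hdom A B j)) -> zeta B)
  (eta_g : forall (k : 'I_m) (j : 'I_n), (forall i, zeta (A i)) -> zeta (A j)).
Hypotheses (Hh : production_function (@hdom n m A B) B h eta_h)
  (Hg : forall (k : 'I_m) (j : 'I_n),
          production_function A (A j) (fun x => g k x j) (eta_g k j)).

Definition hs := proj1_sig (constructive_indefinite_description _ Hh).
Lemma hs_spec : regular (prod_le (fun i => @le (hdom A B i))) (@le B) hs /\
    (forall x : forall i, Max (hdom A B i), hs (fun i => proj1_sig (x i)) = proj1_sig (h x)) /\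
    (forall x : forall i, hdom A B i, eta_h (fun i => size (x i)) = size (hs x)).
Proof. exact (proj2_sig (constructive_indefinite_description _ Hh)). Qed.

Definition gst k j := proj1_sig (constructive_indefinite_description _ (Hg k j)).
Lemma gst_spec k j : regular (prod_le (fun i => @le (A i))) (@le (A j)) (gst k j) /\
    (forall x : forall i, Max (A i), gst k j (fun i => proj1_sig (x i)) = proj1_sig (g k x j)) /\
    (forall x : forall i, A i, eta_g k j (fun i => size (x i)) = size (gst k j x)).
Proof. exact (proj2_sig (constructive_indefinite_description _ (Hg k j))). Qed.

Definition gs k (x : forall i, A i) : forall j, A j := fun j => gst k j x.

Definition FT := (forall i, A i) -> B.
Definition Fle (F F' : FT) := forall x, le (F x) (F' x).

Definition Phi (F : FT) : FT := fun x =>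
  hs (@hjoin n m A B (fun C => car (scpo C)) x (fun k => F (gs k x))).

Definition Hc := ord_continuous (@hdom n m A B) B eta_h /\
   (forall k j, ord_continuous A (A j) (eta_g k j)).

Definition ef (F : FT) : (forall i, zeta (A i)) -> zeta B :=
  fun a => size (F (fun i => pick (a i))).
Definition sinv (F : FT) := forall x y : forall i, A i,
  (forall i, size (x i) = size (y i)) -> size (F x) = size (F y).
Definition Good (F : FT) :=
  monotone (prod_le (fun i => @le (A i))) (@le B) F /\ sinv F /\
  (Hc -> ord_continuous A B (ef F)).

Lemma ef_spec F : sinv F -> forall x, ef F (fun i => size (x i)) = size (F x).
Proof. intros H x. unfold ef. apply H. intros i. apply pick_size. Qed.

Lemma size_Phi F x : size (Phi F x) =
  eta_h (@hjoin n m A B (fun C => ocar (zeta C)) (fun i => size (x i))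
     (fun k => size (F (gs k x)))).
Proof.
  unfold Phi. rewrite <- (proj2 (proj2 hs_spec)). f_equal.
  apply functional_extensionality_dep. intros [i|k]; reflexivity.
Qed.

Lemma gs_size k x j : size (gs k x j) = eta_g k j (fun i => size (x i)).
Proof. unfold gs. symmetry. apply (proj2 (proj2 (gst_spec k j))). Qed.

Lemma ef_Phi F : sinv F -> forall a, ef (Phi F) a =
  eta_h (@hjoin n m A B (fun C => ocar (zeta C)) a (fun k => ef F (fun j => eta_g k j a))).
Proof.
  intros HF a. unfold ef at 1. rewrite size_Phi.
  assert (Ea : (fun i => size (pick (a i))) = a).
  { apply functional_extensionality_dep. intros i. apply pick_size. }
  f_equal. apply functional_extensionality_dep. intros [i|k]; simpl.
  - apply pick_size.
  - rewrite <- ef_spec; auto. f_equal. apply functional_extensionality_dep. intros j.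
    rewrite gs_size. rewrite Ea. reflexivity.
Qed.

Lemma ole_refl' (O : ordT) : forall x : O, ole x x.
Proof. apply ole_refl. Qed.

Lemma prod_ole_refl {I} (Z : I -> ordT) : forall x : forall i, Z i, prod_le (fun i => @ole (Z i)) x x.
Proof. intros x i. apply ole_refl. Qed.

Lemma Good_bot : Good (fun _ => bot B).
Proof.
  split; [|split].
  - intros x y _. apply le_refl.
  - intros x y _. reflexivity.
  - intros _. unfold ord_continuous, ef. apply cont_const. apply ole_refl.
Qed.

Lemma Good_Phi F : Good F -> Good (Phi F).
Proof.
  intros [Fm [Fs Fc]]. split; [|split].
  - intros x y Hxy. unfold Phi. apply (proj1 (proj1 hs_spec)).
    intros [i|k]; simpl. apply Hxy.
    apply Fm. intros j. unfold gs. apply (proj1 (proj1 (gst_spec k j))). exact Hxy.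
  - intros x y Hxy. rewrite !size_Phi. f_equal.
    apply functional_extensionality_dep. intros [i|k]; simpl. apply Hxy.
    apply Fs. intros j. rewrite !gs_size. f_equal.
    apply functional_extensionality_dep. exact Hxy.
  - intros HC. unfold ord_continuous.
    assert (E : ef (Phi F) = fun a =>
      eta_h (@hjoin n m A B (fun C => ocar (zeta C)) a (fun k => ef F (fun j => eta_g k j a)))).
    { apply functional_extensionality. apply ef_Phi. exact Fs. }
    rewrite E. clear E.
    apply (cont_comp (leY := prod_le (fun j => @ole (zeta (hdom A B j))))).
    + apply prod_ole_refl.
    + apply prod_ole_refl.
    + apply cont_tuple. apply prod_ole_refl. intros [i|k]; simpl.
      * apply (cont_proj (fun i => @ole (zeta (A i))) i).
      * apply (cont_comp (leY := prod_le (fun j => @ole (zeta (A j))))).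
        -- apply prod_ole_refl.
        -- apply prod_ole_refl.
        -- apply cont_tuple. apply prod_ole_refl. intros j. apply (proj2 HC).
        -- apply Fc. exact HC.
    + apply (proj1 HC).
Qed.

Lemma Fle_refl F : Fle F F.
Proof. intros x; apply le_refl. Qed.
Lemma Fle_anti F F' : Fle F F' -> Fle F' F -> F = F'.
Proof. intros H1 H2. apply functional_extensionality. intros x. apply le_anti; auto. Qed.
Lemma Fle_trans F1 F2 F3 : Fle F1 F2 -> Fle F2 F3 -> Fle F1 F3.
Proof. intros H1 H2 x. eapply le_trans; eauto. Qed.

Lemma Phi_mono F F' : Fle F F' -> Fle (Phi F) (Phi F').
Proof.
  intros H x. unfold Phi. apply (proj1 (proj1 hs_spec)).
  intros [i|k]; simpl. apply le_refl. apply H.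
Qed.

Lemma Good_sup D : directed Fle D -> (forall F, D F -> Good F) ->
  exists s, is_sup Fle D s /\ Good s.
Proof.
  intros Dd HD.
  assert (dirx : forall x, directed (@le B) (image (fun F : FT => F x) D)).
  { intros x. destruct Dd as [[F0 HF0] Hd]. split.
    - exists (F0 x). exists F0. auto.
    - intros a b [F1 [H1 <-]] [F2 [H2 <-]]. destruct (Hd F1 F2 H1 H2) as [F3 [H3 [L1 L2]]].
      exists (F3 x). split. exists F3; auto. split; auto. }
  pose (s := fun x => proj1_sig (constructive_indefinite_description _ (sup_ex (dirx x)))).
  assert (Hs : forall x, is_sup (@le B) (image (fun F : FT => F x) D) (s x)).
  { intros x. unfold s. exact (proj2_sig (constructive_indefinite_description _ (sup_ex (dirx x)))). }
  assert (Hsz : forall x, is_sup (@ole (zeta B)) (fun o => exists F, D F /\ size (F x) = o) (size (s x))).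
  { intros x. apply (@is_sup_ext _ _ (image (@size B) (image (fun F : FT => F x) D))).
    - intros o. split.
      + intros [y [[F [HF <-]] <-]]. exists F. auto.
      + intros [F [HF <-]]. exists (F x). split; auto. exists F; auto.
    - apply (size_cont (dirx x)). apply Hs. }
  exists s. split; [split|split; [|split]].
  - intros F HF x. apply (Hs x). exists F. auto.
  - intros u Hu x. apply (Hs x). intros z [F [HF <-]]. apply Hu. exact HF.
  - intros x y Hxy. apply (Hs x). intros z [F [HF <-]].
    apply le_trans with (F y). apply (proj1 (HD F HF)). exact Hxy.
    apply (Hs y). exists F. auto.
  - intros x y Hxy. apply (sup_unique (@ole_anti (zeta B)) (Hsz x)).
    apply (@is_sup_ext _ _ (fun o => exists F, D F /\ size (F y) = o)).
    + intros o. split; intros [F [HF <-]]; exists F; split; auto.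
      apply (proj1 (proj2 (HD F HF))). exact Hxy.
      apply (proj1 (proj2 (HD F HF))). intros i; symmetry; apply Hxy.
    + apply Hsz.
  - intros HC. unfold ord_continuous.
    apply (@cont_supfam _ _ _ (prod_ole_refl _) (fun phi => exists F, D F /\ phi = ef F)).
    + intros a. unfold ef at 1.
      apply (@is_sup_ext _ _ (fun o => exists F, D F /\ size (F (fun i => pick (a i))) = o)).
      * intros o. split.
        -- intros [F [HF <-]]. exists (ef F). split. exists F; auto. reflexivity.
        -- intros [phi [[F [HF ->]] <-]]. exists F. auto.
      * apply Hsz.
    + intros phi [F [HF ->]]. apply (proj2 (proj2 (HD F HF))). exact HC.
Qed.

Lemma fix_exists : exists F, Good F /\ Phi F = F.
Proof.
  apply (@BW_fix FT Fle Fle_refl Fle_anti Fle_trans Phi Phi_mono Good (fun _ => bot B)).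
  - exact Good_bot.
  - intros F x. apply bot_le.
  - exact Good_Phi.
  - exact Good_sup.
Qed.



Lemma eg_top k j : eta_g k j (fun i => otop (zeta (A i))) = otop (zeta (A j)).
Proof.
  pose (x := fun i => pick (otop (zeta (A i)))).
  assert (Ex : (fun i => size (x i)) = fun i => otop (zeta (A i))).
  { apply functional_extensionality_dep. intros i. apply pick_size. }
  rewrite <- Ex, (proj2 (proj2 (gst_spec k j))). apply max_top.
  apply (proj2 (proj1 (gst_spec k j))). apply maxprod. intros i. apply top_max. apply pick_size.
Qed.

Lemma eh_top : eta_h (fun j : 'I_n + 'I_m => otop (zeta (hdom A B j))) = otop (zeta B).
Proof.
  pose (x := fun j : 'I_n + 'I_m => pick (otop (zeta (hdom A B j)))).
  assert (Ex : (fun j => size (x j)) = fun j : 'I_n + 'I_m => otop (zeta (hdom A B j))).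
  { apply functional_extensionality_dep. intros i. apply pick_size. }
  rewrite <- Ex, (proj2 (proj2 hs_spec)). apply max_top.
  apply (proj2 (proj1 hs_spec)). apply maxprod. intros i. apply top_max. apply pick_size.
Qed.

Variable (Hgrow : forall beta : 'I_m -> zeta B,
     (exists k, olt (beta k) (otop (zeta B))) ->
     exists k, olt (beta k)
       (eta_h (@hjoin n m A B (fun C => ocar (zeta C))
                 (fun i => otop (zeta (A i))) beta))).
Variables (f : (forall i, Max (A i)) -> Max B) (Hf : defined_by_corecursion h g f).

Lemma fix_eq F : Good F -> Phi F = F -> forall a, ef F a =
  eta_h (@hjoin n m A B (fun C => ocar (zeta C)) a (fun k => ef F (fun j => eta_g k j a))).
Proof.
  intros [_ [Fs _]] HP a. transitivity (ef (Phi F) a). rewrite HP; reflexivity.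
  apply ef_Phi; auto.
Qed.

Lemma fix_top F : Good F -> Phi F = F -> ef F (fun i => otop (zeta (A i))) = otop (zeta B).
Proof.
  intros HG HP. pose proof (fix_eq F HG HP (fun i => otop (zeta (A i)))) as E.
  assert (Eb : (fun k => ef F (fun j => eta_g k j (fun i => otop (zeta (A i)))))
     = fun _ => ef F (fun i => otop (zeta (A i)))).
  { apply functional_extensionality. intros k. f_equal.
    apply functional_extensionality_dep. intros j. apply eg_top. }
  rewrite Eb in E.
  destruct (classic (ef F (fun i => otop (zeta (A i))) = otop (zeta B))) as [ok|ne]; auto.
  exfalso.
  assert (lt : olt (ef F (fun i => otop (zeta (A i)))) (otop (zeta B))).
  { split. apply ole_top. exact ne. }
  destruct (classic (exists k : 'I_m, True)) as [[k _] | nok].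
  - destruct (Hgrow (fun _ => ef F (fun i => otop (zeta (A i)))) (ex_intro _ k lt))
      as [k' [_ Hne]].
    apply Hne. exact E.
  - apply ne. rewrite E.
    assert (Ej : @hjoin n m A B (fun C => ocar (zeta C)) (fun i => otop (zeta (A i)))
       (fun _ => ef F (fun i => otop (zeta (A i)))) = fun j : 'I_n + 'I_m => otop (zeta (hdom A B j))).
    { apply functional_extensionality_dep. intros [i|k]. reflexivity.
      exfalso. apply nok. exists k. auto. }
    rewrite Ej. apply eh_top.
Qed.

Lemma main_res : exists eta_f : (forall i, zeta (A i)) -> zeta B,
    production_function A B f eta_f /\
    (forall alpha : forall i, zeta (A i),
       eta_f alpha =
       eta_h (@hjoin n m A B (fun C => ocar (zeta C)) alpha
                (fun k => eta_f (fun j => eta_g k j alpha)))) /\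
    ((ord_continuous (@hdom n m A B) B eta_h /\
      (forall k j, ord_continuous A (A j) (eta_g k j))) ->
     ord_continuous A B eta_f).
Proof.
  destruct fix_exists as [F [HG HP]]. pose proof HG as HG'. destruct HG' as [Fm [Fs Fc]].
  assert (Htop := fix_top F HG HP).
  exists (ef F). split; [|split].
  - assert (maxF : forall x : forall i, Max (A i), maximal (@le B) (F (fun i => proj1_sig (x i)))).
    { intros x. apply top_max. rewrite <- ef_spec; auto.
      assert (E : (fun i => size (proj1_sig (x i))) = fun i => otop (zeta (A i))).
      { apply functional_extensionality_dep. intros i. apply max_top. exact (proj2_sig (x i)). }
      rewrite E. exact Htop. }
    pose (f' := fun x => exist _ (F (fun i => proj1_sig (x i))) (maxF x) : Max B).
    assert (Hcor : corec_eq h g f').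
    { intros x. apply Max_eq. simpl.
      rewrite <- (proj1 (proj2 hs_spec)).
      transitivity (Phi F (fun i => proj1_sig (x i))). rewrite HP; reflexivity.
      unfold Phi. f_equal. apply functional_extensionality_dep. intros [i|k]; simpl.
      reflexivity. f_equal. apply functional_extensionality_dep. intros j. unfold gs.
      apply (proj1 (proj2 (gst_spec k j))). }
    exists F. split; [split|split].
    + exact Fm.
    + intros x Hx. apply top_max. rewrite <- ef_spec; auto.
      assert (E : (fun i => size (x i)) = fun i => otop (zeta (A i))).
      { apply functional_extensionality_dep. intros i. apply max_top.
        exact (prodmax _ _ Hx i). }
      rewrite E. exact Htop.
    + intros x. rewrite <- (proj2 Hf f' Hcor x). reflexivity.
    + intros x. apply ef_spec; auto.
  - apply fix_eq; auto.
  - intros HC. exact (Fc HC).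
Qed.

End Main.

Theorem theorem4p13 (n m : nat) (A : 'I_n -> sized_cpo) (B : sized_cpo)
  (h : (forall j : 'I_n + 'I_m, Max (hdom A B j)) -> Max B)
  (g : 'I_m -> (forall i, Max (A i)) -> forall i, Max (A i))
  (eta_h : (forall j : 'I_n + 'I_m, zeta (hdom A B j)) -> zeta B)
  (eta_g : forall (k : 'I_m) (j : 'I_n), (forall i, zeta (A i)) -> zeta (A j))
  (Hh : production_function (@hdom n m A B) B h eta_h)
  (Hg : forall (k : 'I_m) (j : 'I_n),
          production_function A (A j) (fun x => g k x j) (eta_g k j))
  (Hgrow : forall beta : 'I_m -> zeta B,
     (exists k, olt (beta k) (otop (zeta B))) ->
     exists k, olt (beta k)
       (eta_h (@hjoin n m A B (fun C => ocar (zeta C))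
                 (fun i => otop (zeta (A i))) beta)))
  (f : (forall i, Max (A i)) -> Max B)
  (Hf : defined_by_corecursion h g f) :
  exists eta_f : (forall i, zeta (A i)) -> zeta B,
    production_function A B f eta_f /\
    (forall alpha : forall i, zeta (A i),
       eta_f alpha =
       eta_h (@hjoin n m A B (fun C => ocar (zeta C)) alpha
                (fun k => eta_f (fun j => eta_g k j alpha)))) /\
    ((ord_continuous (@hdom n m A B) B eta_h /\
      (forall k j, ord_continuous A (A j) (eta_g k j))) ->
     ord_continuous A B eta_f).
Proof. eapply main_res; eassumption. Qed.
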